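(* Let $U,T,S\subseteq\mathbb{Z}_{>0}$ be finite with $U\preceq T\preceq S$. Assume there is $x\notin T$ with $|U_{<x}|=|T_{<x}|$, and assume there exists $y\in T_{<x}$ such that $(T\cup\{x\})\setminus\{y\}\preceq S$; let $y$ be the smallest such element. Then for every $S'\subseteq S$, $$U\triangleleft(T\triangleleft S')=U\triangleleft\big(((T\cup\{x\})\setminus\{y\})\triangleleft S'\big),$$ and consequently $U\triangleleft T=U\triangleleft((T\cup\{x\})\setminus\{y\})$.
   Context: For a finite set $S\subseteq\mathbb{Z}_{>0}$, $S(i)$ denotes its $i$th smallest element and $S_{<x}=\{s\in S:s<x\}$. $T\preceq S$ means $|T|\ge|S|$ and $T(i)<S(i)$ for all $i\in[|S|]$; $U\preceq T\preceq S$ means $U\preceq T$ and $T\preceq S$. For finite $S,T$, $T\triangleleft S$ is computed by going through $S$ from largest to smallest; each $s$ picks the largest element of $T$ less than $s$ not yet picked (if one exists); $T\triangleleft S$ is the set of picked elements. *)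

(* Defs.v *)
From mathcomp Require Import all_boot.
From mathcomp Require Import finmap.
Set Implicit Arguments. Unset Strict Implicit. Unset Printing Implicit Defensive.
Local Open Scope fset_scope.

(* increasing enumeration of a finite set: S(i) = nth 0 (sorted S) (i-1) *)
Definition sorted_elems (S : {fset nat}) : seq nat := sort leq (enum_fset S).

Definition fset_lt (S : {fset nat}) (x : nat) : {fset nat} :=
  [fset s in S | s < x].

Definition pos_set (S : {fset nat}) : Prop := forall s, s \in S -> 0 < s.

(* T ⪯ S : |T| >= |S| and T(i) < S(i) for all i in [|S|] (0-indexed here) *)
Definition prec (T S : {fset nat}) : Prop :=
  #|` S| <= #|` T| /\
  forall i, i < #|` S| -> nth 0 (sorted_elems T) i < nth 0 (sorted_elems S) i.

Definition pick_below (s : nat) (avail : {fset nat}) : option nat :=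
  let c := [seq t <- enum_fset avail | t < s] in
  if c is [::] then None else Some (\max_(t <- c) t).

(* go through ss (given from largest to smallest); each s picks the largest
   not-yet-picked element of avail below s; return the set of picked elements *)
Fixpoint tri_aux (ss : seq nat) (avail : {fset nat}) : {fset nat} :=
  match ss with
  | [::] => fset0
  | s :: ss' =>
      match pick_below s avail with
      | Some t => t |` tri_aux ss' (avail `\ t)
      | None => tri_aux ss' avail
      end
  end.

Definition tri (T S : {fset nat}) : {fset nat} :=
  tri_aux (rev (sorted_elems S)) T.

(* Main.v *)
Require Import Defs.
From mathcomp Require Import all_boot.
From mathcomp Require Import finmap.
From mathcomp Require Import zify.
Set Implicit Arguments. Unset Strict Implicit. Unset Printing Implicit Defensive.
Local Open Scope fset_scope.
Local Open Scope nat_scope.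

Definition C (X : {fset nat}) (P : pred nat) := count P (enum_fset X).

Lemma C_ext (X : {fset nat}) (P Q : pred nat) :
  (forall z, z \in X -> P z = Q z) -> C X P = C X Q.
Proof. by move=> H; apply: eq_in_count => z Hz; apply: H. Qed.

Lemma C_sub (X Y : {fset nat}) (P Q : pred nat) :
  (forall z, z \in X -> P z -> (z \in Y) && Q z) -> C X P <= C Y Q.
Proof.
move=> H; rewrite /C -!size_filter; apply: uniq_leq_size.
  by rewrite filter_uniq // fset_uniq.
move=> z; rewrite !mem_filter => /andP [Pz Xz].
by have /andP [Yz Qz] := H z Xz Pz; rewrite Qz.
Qed.

Lemma C_split (X : {fset nat}) (P Q R : pred nat) :
  (forall z, z \in X -> P z = Q z || R z) ->
  (forall z, z \in X -> ~~ (Q z && R z)) -> C X P = C X Q + C X R.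
Proof.
move=> H1 H2; rewrite /C -count_predUI.
rewrite (@eq_in_count _ (predI Q R) pred0); last first.
  by move=> z Hz /=; apply/negbTE/H2.
rewrite count_pred0 addn0; apply: eq_in_count => z Hz /=; exact: H1.
Qed.

Lemma C_0 (X : {fset nat}) (P : pred nat) :
  (forall z, z \in X -> ~~ P z) -> C X P = 0.
Proof.
move=> H; rewrite /C (@eq_in_count _ P pred0) ?count_pred0 //.
by move=> z Hz /=; apply/negbTE/H.
Qed.

Lemma C_pos (X : {fset nat}) (P : pred nat) :
  0 < C X P -> exists2 z, z \in X & P z.
Proof. by rewrite /C -has_count => /hasP [z Hz Pz]; exists z. Qed.

Lemma C_add1 (X : {fset nat}) x (P : pred nat) :
  x \notin X -> C (x |` X) P = P x + C X P.
Proof.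
move=> Hx; rewrite /C.
have Hp : perm_eq (enum_fset (x |` X)) (x :: enum_fset X).
  apply: uniq_perm; first exact: fset_uniq.
    by rewrite /= Hx fset_uniq.
  by move=> z; rewrite in_cons; apply: in_fset1U.
by rewrite (permP Hp).
Qed.

Lemma C_del1 (X : {fset nat}) y (P : pred nat) :
  y \in X -> C (X `\ y) P + P y = C X P.
Proof.
move=> Hy; rewrite /C.
have Hp : perm_eq (enum_fset X) (y :: enum_fset (X `\ y)).
  apply: uniq_perm; first exact: fset_uniq.
    by rewrite /= fset_uniq andbT in_fsetD1 eqxx.
  move=> z; rewrite in_cons.
  have -> : (z \in enum_fset (X `\ y)) = (z \in X `\ y) by [].
  rewrite in_fsetD1. have -> : (z \in enum_fset X) = (z \in X) by [].
  by case: eqVneq => [->|] //=.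
by rewrite (permP Hp) /= addnC.
Qed.

Lemma C_one (X : {fset nat}) z : z \in X -> C X (fun w => w == z) = 1.
Proof.
move=> Hz; rewrite -(C_del1 _ Hz) eqxx C_0 //.
by move=> w; rewrite in_fsetD1 => /andP [].
Qed.

Lemma C_card (X : {fset nat}) (P : pred nat) :
  #|` [fset z in X | P z]| = C X P.
Proof.
rewrite /C -size_filter; apply: perm_size; apply: uniq_perm.
- exact: fset_uniq.
- by rewrite filter_uniq // fset_uniq.
- move=> z; rewrite mem_filter.
  have -> : (z \in enum_fset [fset z0 in X | P z0]) = (z \in [fset z0 in X | P z0]) by [].
  by rewrite !inE andbC.
Qed.


Lemma bigmax_in (c : seq nat) a : a \in c -> \max_(t <- c) t \in c.
Proof.
elim: c a => [//|b c IH] a _; rewrite big_cons in_cons.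
case: c IH => [|d c] IH.
  by rewrite big_nil maxn0 eqxx.
have /IH : d \in d :: c by rewrite in_cons eqxx.
by case: (leqP b (\max_(t <- d :: c) t)) => H Hm; rewrite ?(maxn_idPr H) ?(maxn_idPl (ltnW H)) ?eqxx ?Hm ?orbT.
Qed.

Lemma bigmax_ge (c : seq nat) z : z \in c -> z <= \max_(t <- c) t.
Proof.
elim: c => [//|b c IH]; rewrite in_cons big_cons => /orP [/eqP ->|/IH H].
  exact: leq_maxl.
exact: leq_trans H (leq_maxr _ _).
Qed.

Lemma pick_belowP s (avail : {fset nat}) :
  match pick_below s avail with
  | Some m => [/\ m \in avail, m < s & forall z, z \in avail -> z < s -> z <= m]
  | None => forall z, z \in avail -> s <= z
  end.
Proof.
rewrite /pick_below.
case Hc: [seq t <- enum_fset avail | t < s] => [|a l].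
  move=> z Hz; rewrite leqNgt; apply/negP => Hzs.
  have : z \in [seq t <- enum_fset avail | t < s] by rewrite mem_filter Hzs.
  by rewrite Hc.
have Hm : \max_(t <- a :: l) t \in [seq t <- enum_fset avail | t < s].
  by rewrite Hc; apply: (@bigmax_in _ a); rewrite in_cons eqxx.
rewrite mem_filter in Hm; case/andP: Hm => Hm1 Hm2.
split => //.
move=> z Hz Hzs; apply: bigmax_ge; rewrite -Hc mem_filter Hzs; exact: Hz.
Qed.

Definition Pm (U A M : {fset nat}) :=
  M `<=` U /\
  forall u, u \in U -> (u \in M) = (C M (fun z => u < z) < C A (fun z => u < z)).

Lemma tri_aux_spec ss : sorted (fun a b => b < a) ss -> forall avail,
  tri_aux ss avail `<=` avail /\
  forall u, u \in avail -> (u \in tri_aux ss avail) =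
     (C (tri_aux ss avail) (fun z => u < z) < count (fun z => u < z) ss).
Proof.
elim: ss => [|s ss IH] Hs avail /=.
  split; first exact: fsub0set.
  by move=> u _; rewrite in_fset0 C_0.
have Hall : all (fun z => z < s) ss.
  apply: (order_path_min (leT := fun a b => b < a)) Hs.
  by move=> a b c Hba Hcb; exact: ltn_trans Hcb Hba.
have Hss : sorted (fun a b => b < a) ss by case: ss Hs Hall {IH} => //= a l /andP [].
have Hcnt0 : forall u, s <= u -> count (fun z => u < z) ss = 0.
  move=> u Hu; apply/eqP; rewrite -leqn0 leqNgt -has_count; apply/hasP => [[z Hz Huz]].
  have := allP Hall z Hz; lia.
have := pick_belowP s avail.
case: (pick_below s avail) => [m [Hm Hms Hmax]|Hnone].
  have [Hsub Hspec] := IH Hss (avail `\ m).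
  set R' := tri_aux ss (avail `\ m) in Hsub Hspec *.
  have HmR : m \notin R'.
    apply/negP => /(fsubsetP Hsub); by rewrite in_fsetD1 eqxx.
  have Hbig : forall z, z \in R' -> s <= z -> False.
    move=> z Hz Hsz.
    have Hza : z \in avail `\ m by apply: (fsubsetP Hsub).
    have := Hspec z Hza; rewrite Hz Hcnt0 //.
  split.
    apply/fsubsetP => z; rewrite in_fset1U => /orP [/eqP -> //|/(fsubsetP Hsub)].
    by rewrite in_fsetD1 => /andP [].
  move=> u Hu.
  rewrite C_add1 // in_fset1U.
  case: (eqVneq u m) => [->|Hum] /=.
    rewrite ltnn add0n (@C_0 R'); first by rewrite Hms.
    move=> z Hz; apply/negP => Hmz.
    have Hza : z \in avail by move: (fsubsetP Hsub z Hz); rewrite in_fsetD1 => /andP [].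
    case: (ltnP z s) => Hzs.
      have := Hmax z Hza Hzs; lia.
    exact: Hbig z Hz Hzs.
  have Hua : u \in avail `\ m by rewrite in_fsetD1 Hum.
  case: (ltnP u s) => Hus.
    have Hum' : u < m by have := Hmax u Hu Hus; move: Hum => /eqP; lia.
    rewrite Hum' (Hspec u Hua) /=. lia.
  rewrite (Hspec u Hua) Hcnt0 //.
have [Hsub Hspec] := IH Hss avail.
split => // u Hu.
rewrite (Hspec u Hu) Hcnt0 ?Hnone //.
have := Hnone u Hu; rewrite leqNgt; by case: (u < s).
Qed.


Lemma C_sorted (A : {fset nat}) (P : pred nat) :
  count P (rev (sorted_elems A)) = C A P.
Proof.
rewrite count_rev /sorted_elems /C; apply/permP.
by rewrite perm_sort perm_refl.
Qed.

Lemma tri_spec (U A : {fset nat}) : Pm U A (tri U A).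
Proof.
have Hs : sorted (fun a b => b < a) (rev (sorted_elems A)).
  rewrite rev_sorted.
  have : sorted ltn (sorted_elems A).
    by rewrite ltn_sorted_uniq_leq /sorted_elems sort_uniq fset_uniq sort_sorted //; exact: leq_total.
  by [].
have [H1 H2] := tri_aux_spec Hs U.
split => // u Hu; rewrite /tri (H2 u Hu) C_sorted //.
Qed.

Lemma ex_max_in (X : {fset nat}) (q : pred nat) a : a \in X -> q a ->
  exists m, [/\ m \in X, q m & forall z, z \in X -> q z -> z <= m].
Proof.
move=> Ha Hq.
have Hin : a \in [seq t <- enum_fset X | q t] by rewrite mem_filter Hq.
have := bigmax_in Hin; rewrite mem_filter => /andP [Hm1 Hm2].
exists (\max_(t <- [seq t <- enum_fset X | q t]) t); split => //.
move=> z Hz Hqz; apply: bigmax_ge; rewrite mem_filter Hqz; exact: Hz.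
Qed.

Lemma ex_min_nat (P : pred nat) a : P a -> exists m, P m /\ forall n, P n -> m <= n.
Proof.
move=> Ha; have exP : exists n, P n by exists a.
case: (ex_minnP exP) => m Pm Hm; by exists m.
Qed.

Lemma Pm_unique (U A M1 M2 : {fset nat}) : Pm U A M1 -> Pm U A M2 -> M1 = M2.
Proof.
move=> [S1 H1] [S2 H2]; apply/fsetP => z.
case E: ((z \in M1) == (z \in M2)); first by apply/eqP.
exfalso.
have Hz : z \in M1 `|` M2.
  rewrite in_fsetU; move: E; by case: (z \in M1); case: (z \in M2).
have [m [Hm Hqm Hmax]] := ex_max_in (q := fun w => (w \in M1) != (w \in M2)) Hz (negbT E).
have Hagree : forall w, m < w -> (w \in M1) = (w \in M2).
  move=> w Hw; apply/eqP; apply/negP => Hq.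
  have Hwu : w \in M1 `|` M2.
    rewrite in_fsetU; move: Hq; by case: (w \in M1); case: (w \in M2).
  have := Hmax w Hwu (introN idP Hq); lia.
have Hc : C M1 (fun w => m < w) = C M2 (fun w => m < w).
  apply/eqP; rewrite eqn_leq; apply/andP; split; apply: C_sub => w Hw Hmw; rewrite Hmw andbT.
    by rewrite -Hagree.
  by rewrite Hagree.
have HmU : m \in U.
  move: Hm; rewrite in_fsetU => /orP [/(fsubsetP S1)|/(fsubsetP S2)] //.
move: Hqm; rewrite (H1 m HmU) (H2 m HmU) Hc; by rewrite eqxx.
Qed.

Lemma Pm_le (U A M : {fset nat}) : Pm U A M ->
  forall v, C M (fun z => v < z) <= C A (fun z => v < z).
Proof.
move=> [S H] v.
case: (posnP (C M (fun z => v < z))) => [->//|Hp].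
have [z Hz Hvz] := C_pos Hp.
have [m [/andP [HmM Hvm] Hmin]] := ex_min_nat (P := fun n => (n \in M) && (v < n)) (a := z) (introT andP (conj Hz Hvz)).
have HmU : m \in U by apply: (fsubsetP S).
have := H m HmU; rewrite HmM => /esym Hlt.
rewrite (@C_split M _ (fun w => w == m) (fun w => m < w)); first last.
- by move=> w _; apply/negP => /andP [/eqP -> ]; rewrite ltnn.
- move=> w Hw; case: (eqVneq w m) => [->|Hwm] /=; first by rewrite Hvm.
  case: (ltnP v w) => Hvw /=.
    have := Hmin w; rewrite Hw Hvw => /(_ isT) Hle; lia.
  lia.
rewrite C_one //.
have : C A (fun w => m < w) <= C A (fun w => v < w).
  by apply: C_sub => w Hw Hmw; rewrite Hw /=; lia.
lia.
Qed.


Lemma sorted_count (s : seq nat) : sorted ltn s -> forall i v, i < size s ->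
  (i < count (fun z => z < v) s) = (nth 0 s i < v).
Proof.
elim: s => [//|a s IH] Hs i v Hi.
have Hall : all (fun z => a < z) s.
  by apply: (order_path_min (leT := ltn)) Hs; exact: ltn_trans.
have Hs' : sorted ltn s by case: s Hs Hall {IH Hi} => //= b l /andP [].
have Hc0 : v <= a -> count (fun z => z < v) s = 0.
  move=> Hva; apply/eqP; rewrite -leqn0 leqNgt -has_count; apply/hasP => [[z Hz Hzv]].
  have := allP Hall z Hz; lia.
case: i Hi => [|i] Hi /=.
  case: (ltnP a v) => Hav /=; first by [].
  by rewrite Hc0.
have Hi' : i < size s by [].
case: (ltnP a v) => Hav /=.
  by rewrite add1n ltnS IH.
rewrite Hc0 // add0n.
have := allP Hall _ (mem_nth 0 Hi'); rewrite ltn0 => /= H; apply/esym/negbTE; rewrite -leqNgt; lia.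
Qed.

Lemma sorted_elems_sorted (X : {fset nat}) : sorted ltn (sorted_elems X).
Proof.
by rewrite ltn_sorted_uniq_leq /sorted_elems sort_uniq fset_uniq sort_sorted //; exact: leq_total.
Qed.

Lemma sorted_elems_count (X : {fset nat}) (P : pred nat) :
  count P (sorted_elems X) = C X P.
Proof. by rewrite /sorted_elems /C; apply/permP; rewrite perm_sort perm_refl. Qed.

Lemma sorted_elems_size (X : {fset nat}) : size (sorted_elems X) = #|` X|.
Proof. by rewrite /sorted_elems size_sort. Qed.

Lemma prec_count (T S : {fset nat}) :
  prec T S <-> forall v, C S (fun z => z <= v) <= C T (fun z => z < v).
Proof.
have HsT := sorted_count (sorted_elems_sorted T).
have HsS := sorted_count (sorted_elems_sorted S).
have ES : forall v, C S (fun z => z <= v) = count (fun z => z < v.+1) (sorted_elems S).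
  by move=> v; rewrite sorted_elems_count.
have ET : forall v, C T (fun z => z < v) = count (fun z => z < v) (sorted_elems T).
  by move=> v; rewrite sorted_elems_count.
split.
  move=> [Hsz Hi] v.
  case: (posnP (C S (fun z => z <= v))) => [->//|Hp].
  set m := C S (fun z => z <= v) in Hp *.
  have Hm : m <= #|` S|.
    by rewrite /m ES -sorted_elems_size count_size.
  have H1 : nth 0 (sorted_elems S) m.-1 < v.+1.
    rewrite -HsS; first by rewrite -ES /m; lia.
    rewrite sorted_elems_size; lia.
  have H2 := Hi m.-1 (ltac:(lia)).
  have H3 : m.-1 < count (fun z => z < v) (sorted_elems T).
    rewrite HsT; first lia.
    rewrite sorted_elems_size; lia.
  rewrite ET; lia.
move=> H.
have Hgen : forall i, i < #|` S| -> i < C T (fun z => z < nth 0 (sorted_elems S) i).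
  move=> i Hi.
  have := H (nth 0 (sorted_elems S) i).
  have : i < count (fun z => z < (nth 0 (sorted_elems S) i).+1) (sorted_elems S).
    by rewrite HsS ?sorted_elems_size.
  rewrite -ES; lia.
split.
  case: (posnP #|` S|) => [->//|Hp].
  have := Hgen (#|` S|.-1) (ltac:(lia)).
  have : C T (fun z => z < nth 0 (sorted_elems S) #|` S|.-1) <= #|` T|.
    by rewrite /C count_size.
  lia.
move=> i Hi.
have H1 := Hgen i Hi.
have Hsz : i < size (sorted_elems T).
  rewrite ET in H1; exact: leq_trans H1 (count_size _ _).
by rewrite -HsT // -ET.
Qed.


Lemma C_swap (A : {fset nat}) p x (Q : pred nat) : p \in A -> x \notin A ->
  C ((x |` A) `\ p) Q + Q p = Q x + C A Q.
Proof.
move=> Hp Hx; rewrite C_del1 ?C_add1 //.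
by rewrite in_fset1U Hp orbT.
Qed.

Lemma UL (U A M : {fset nat}) p x : Pm U A M -> p \in A -> x \notin A -> p < x ->
  (forall u, u \in U -> p <= u -> u < x ->
     C U (fun z => u < z < x) < C A (fun z => u < z < x)) ->
  Pm U ((x |` A) `\ p) M.
Proof.
move=> HP Hp Hx Hpx Hloc; have Hle := Pm_le HP; case: HP => [S H].
split => // u Hu.
have Hs := C_swap (fun z => u < z) Hp Hx.
case: (boolP ((p <= u) && (u < x))) => [/andP [Hpu Hux]|Hn].
  have Hlt : C M (fun z => u < z) < C A (fun z => u < z).
    have E1 : C M (fun z => u < z) = C M (fun z => u < z < x) + C M (fun z => x <= z).
      apply: C_split => z _; lia.
    have E2 : C A (fun z => u < z) = C A (fun z => u < z < x) + C A (fun z => x <= z).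
      apply: C_split => z _; lia.
    have E3 : C M (fun z => x <= z) <= C A (fun z => x <= z).
      have := Hle x.-1.
      rewrite (@C_ext M (fun z => x.-1 < z) (fun z => x <= z)); last by move=> z _; lia.
      rewrite (@C_ext A (fun z => x.-1 < z) (fun z => x <= z)) //; by move=> z _; lia.
    have E4 : C M (fun z => u < z < x) <= C U (fun z => u < z < x).
      by apply: C_sub => z Hz ->; rewrite (fsubsetP S z Hz).
    have := Hloc u Hu Hpu Hux; lia.
  rewrite (H u Hu) Hlt.
  move: Hs; rewrite /= Hux ltnNge Hpu /=; lia.
rewrite (H u Hu).
have -> : C ((x |` A) `\ p) (fun z => u < z) = C A (fun z => u < z).
  move: Hs Hn => /=; case: (ltnP p u); case: (ltnP u x); case: (ltnP u p) => //=; lia.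
by [].
Qed.


Lemma C_mem_pos (X : {fset nat}) (P : pred nat) z : z \in X -> P z -> 0 < C X P.
Proof. by move=> Hz Pz; rewrite /C -has_count; apply/hasP; exists z. Qed.

Lemma dom_lemma (T S' A : {fset nat}) y z :
  Pm T S' A -> y < z ->
  (forall v, y < v -> v <= z -> C S' (fun w => y < w <= v) <= C T (fun w => y < w < v)) ->
  C S' (fun w => z < w) <= C A (fun w => z <= w) ->
  C S' (fun w => y < w) <= C A (fun w => y < w).
Proof.
move=> [SA HA] Hyz Hdom Hz.
rewrite leqNgt; apply/negP => Hlt.
have Pz : (y < z <= z) && (C S' (fun w => z < w) <= C A (fun w => z <= w)).
  by rewrite Hyz leqnn Hz.
have [w [/andP [/andP [Hyw Hwz] Hw] Hmin]] := ex_min_nat (P := fun n => (y < n <= z) && (C S' (fun w => n < w) <= C A (fun w => n <= w))) Pz.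
have Hbelow : forall t, t \in T -> y < t -> t < w -> t \in A.
  move=> t Ht Hyt Htw.
  have Hnot : ~~ (C S' (fun w0 => t < w0) <= C A (fun w0 => t <= w0)).
    apply/negP => Hc.
    have := Hmin t; rewrite Hyt Hc /= (leq_trans (ltnW Htw) Hwz) => /(_ isT); lia.
  rewrite (HA t Ht).
  have : C A (fun w0 => t < w0) <= C A (fun w0 => t <= w0).
    by apply: C_sub => z0 Hz0 /= H0; rewrite Hz0 /=; lia.
  move: Hnot; rewrite -ltnNge => H1 H2. apply/esym. lia.
have E1 : C S' (fun v => y < v) = C S' (fun v => y < v <= w) + C S' (fun v => w < v).
  apply: C_split => z0 _; lia.
have E2 : C A (fun v => y < v) = C A (fun v => y < v < w) + C A (fun v => w <= v).
  apply: C_split => z0 _; lia.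
have E3 := Hdom w Hyw Hwz.
have E4 : C T (fun v => y < v < w) <= C A (fun v => y < v < w).
  apply: C_sub => z0 Hz0 /andP [H1 H2]; by rewrite (Hbelow z0 Hz0 H1 H2) H1 H2.
lia.
Qed.


Lemma bool_lt_true (a b : nat) : a < b -> true = (a < b).
Proof. by move=> ->. Qed.
Lemma bool_lt_false (a b : nat) : b <= a -> false = (a < b).
Proof. by rewrite leqNgt => /negbTE ->. Qed.

Lemma Tlevel (T S' A : {fset nat}) x y :
  Pm T S' A -> y \in T -> y < x -> x \notin T ->
  (forall v, y < v -> v <= x -> C S' (fun w => y < w <= v) <= C T (fun w => y < w < v)) ->
  tri ((x |` T) `\ y) S' = A \/
  exists p, [/\ p \in A, p < x, tri ((x |` T) `\ y) S' = (x |` A) `\ p &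
                forall t, t \in T -> p < t -> t < x -> t \in A].
Proof.
move=> HPA HyT Hyx HxT Hdom.
have [SA HA] := HPA.
have HxA : x \notin A by apply/negP => /(fsubsetP SA); rewrite (negbTE HxT).
case: (leqP (C S' (fun w => x < w)) (C A (fun w => x < w))) => HEx.
  left.
  have HyA : y \notin A.
    have Hd := dom_lemma HPA Hyx Hdom.
    have : C S' (fun w => y < w) <= C A (fun w => y < w).
      apply: Hd; apply: (leq_trans HEx); apply: C_sub => z0 Hz0 /= H0; rewrite Hz0 /=; lia.
    by rewrite (HA y HyT) leqNgt => /negbTE ->.
  have HP' : Pm ((x |` T) `\ y) S' A.
    split.
      apply/fsubsetP => z Hz; rewrite in_fsetD1 in_fset1U (fsubsetP SA z Hz) orbT andbT.
      by apply/eqP => Ez; move: HyA; rewrite -Ez Hz.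
    move=> t; rewrite in_fsetD1 in_fset1U => /andP [Hty /orP [/eqP ->|Ht]].
      by rewrite (negbTE HxA); apply: bool_lt_false.
    exact: HA.
  exact: Pm_unique (tri_spec _ _) HP'.
right.
pose q := fun t => (y <= t < x) && ((t == y) || (C S' (fun w => t < w) <= C A (fun w => t < w) + 1)).
have Hqy : q y by rewrite /q leqnn Hyx eqxx.
have [p [HpT /andP [/andP [Hyp Hpx] Hqp] Hmax]] := ex_max_in HyT Hqy.
have Hi : forall t, t \in T -> p < t -> t < x -> C A (fun w => t < w) + 2 <= C S' (fun w => t < w).
  move=> t Ht Hpt Htx; rewrite leqNgt; apply/negP => Hc.
  have : q t by rewrite /q Htx (leq_trans Hyp (ltnW Hpt)) /=; apply/orP; right; lia.
  move/(Hmax t Ht); lia.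
have HiA : forall t, t \in T -> p < t -> t < x -> t \in A.
  move=> t Ht Hpt Htx; rewrite (HA t Ht); have := Hi t Ht Hpt Htx; lia.
have HpA : p \in A.
  rewrite (HA p HpT).
  case: (posnP (C T (fun w => p < w < x))) => Hc.
    have E1 : C A (fun w => p < w) = C A (fun w => x < w).
      apply: C_ext => z Hz.
      have HzT := fsubsetP SA z Hz.
      case: (ltnP p z) => Hpz /=; last by symmetry; apply/negbTE; rewrite -leqNgt; lia.
      case: (ltnP z x) => Hzx.
        by have := @C_mem_pos T (fun w => p < w < x) z HzT; rewrite /= Hpz Hzx Hc => /(_ isT).
      symmetry; rewrite ltn_neqAle Hzx andbT.
      by apply/eqP => Exz; move: HxT; rewrite Exz HzT.
    have E2 : C S' (fun w => x < w) <= C S' (fun w => p < w).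
      apply: C_sub => z0 Hz0 /= H0; rewrite Hz0 /=; lia.
    rewrite E1; lia.
  have [t Ht /andP [Hpt Htx]] := C_pos Hc.
  have [t1 [/andP [Ht1 /andP [Hpt1 Ht1x]] Hmin]] :=
    ex_min_nat (P := fun n => (n \in T) && (p < n < x)) (introT andP (conj Ht (introT andP (conj Hpt Htx)))).
  have E1 : C A (fun w => p < w) = C A (fun w => w == t1) + C A (fun w => t1 < w).
    apply: C_split => z Hz.
      have HzT := fsubsetP SA z Hz.
      case: (eqVneq z t1) => [->|Hzt] /=; first by rewrite Hpt1.
      case: (ltnP p z) => Hpz /=.
        case: (ltnP t1 z) => // Hzt1.
        case: (ltnP z x) => Hzx.
          have := Hmin z; rewrite HzT Hpz Hzx => /(_ isT); move: Hzt => /eqP; lia.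
        lia.
      lia.
    by apply/negP => /andP [/eqP ->]; rewrite ltnn.
  rewrite E1 C_one; last exact: HiA.
  have := Hi t1 Ht1 Hpt1 Ht1x.
  have : C S' (fun w => t1 < w) <= C S' (fun w => p < w).
    apply: C_sub => z0 Hz0 /= H0; rewrite Hz0 /=; lia.
  lia.
have HyA : p != y -> y \notin A.
  move=> Hpy.
  have Hyp' : y < p by move: Hpy => /eqP; lia.
  have Hqp' : C S' (fun w => p < w) <= C A (fun w => p < w) + 1.
    by move: Hqp; rewrite (negbTE Hpy).
  have Hd := dom_lemma HPA Hyp'.
  have : C S' (fun w => y < w) <= C A (fun w => y < w).
    apply: Hd.
      move=> v Hyv Hvp; apply: Hdom => //; lia.
    have : C A (fun w => p <= w) = C A (fun w => w == p) + C A (fun w => p < w).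
      apply: C_split => z _; first by case: (eqVneq z p) => [->|H] /=; [rewrite leqnn | lia].
      by apply/negP => /andP [/eqP ->]; rewrite ltnn.
    rewrite C_one //; lia.
  by rewrite (HA y HyT) leqNgt => /negbTE ->.
have Hsw := fun Q => C_swap Q HpA HxA.
exists p; split => //.
apply: Pm_unique (tri_spec _ _) _.
split.
  apply/fsubsetP => z; rewrite !in_fsetD1 !in_fset1U => /andP [Hzp /orP [/eqP ->|Hz]].
    by rewrite eqxx andbT; move: Hyx; case: eqVneq => // ->; rewrite ltnn.
  rewrite (fsubsetP SA z Hz) orbT andbT.
  case: (eqVneq p y) => [Epy|Hpy]; first by rewrite -Epy.
  by apply/eqP => Ez; move: (HyA Hpy); rewrite -Ez Hz.
move=> t; rewrite in_fsetD1 in_fset1U => /andP [Hty /orP [/eqP ->|Ht]].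
  have := Hsw (fun w => x < w); rewrite /= ltnn ltnNge (ltnW Hpx) /= add0n addn0 => ->.
  rewrite in_fsetD1 in_fset1U eqxx /=.
  have -> : (x != p) by apply/eqP => E; move: Hpx; rewrite E ltnn.
  by apply: bool_lt_true.
have Htx : t != x by apply/eqP => E; move: HxT; rewrite -E Ht.
have Hs := Hsw (fun w => t < w); simpl in Hs.
rewrite in_fsetD1 in_fset1U (negbTE Htx) /=.
case: (ltngtP t p) => Htp.
- rewrite (HA t Ht) /=; have Htp0 : (t != p) by move: Htp; case: eqVneq => // ->; rewrite ltnn.
  move: Hs; rewrite Htp (ltn_trans Htp Hpx) /= => Hs.
  have -> : C ((x |` A) `\ p) (fun w => t < w) = C A (fun w => t < w) by lia.
  by [].
- case: (ltnP t x) => Htx'.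
    rewrite (HiA t Ht Htp Htx') /=.
    apply: bool_lt_true; have := Hi t Ht Htp Htx'.
    move: Hs; rewrite Htx' ltnNge (ltnW Htp) /=; lia.
  rewrite (HA t Ht).
  have Htx2 : x < t by rewrite ltn_neqAle eq_sym Htx Htx'.
  move: Hs; rewrite [t < p]ltnNge (ltnW Htp) [t < x]ltnNge (ltnW Htx2) /= => Hs.
  have -> : C ((x |` A) `\ p) (fun w => t < w) = C A (fun w => t < w) by lia.
  by [].
- move: Hs; rewrite Htp => Hs /=.
  have Hpy : p != y by rewrite -Htp.
  have Hqp' : C S' (fun w => p < w) <= C A (fun w => p < w) + 1.
    by move: Hqp; rewrite (negbTE Hpy).
  apply: bool_lt_false.
  move: Hs; rewrite ltnn Hpx /=; lia.
Qed.

Local Open Scope fset_scope.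


Theorem lemma4p16 (U T S : {fset nat}) (x y : nat) :
  pos_set U -> pos_set T -> pos_set S ->
  prec U T -> prec T S ->
  0 < x -> x \notin T ->
  #|` fset_lt U x| = #|` fset_lt T x| ->
  y \in fset_lt T x ->
  prec ((x |` T) `\ y) S ->
  (forall y', y' \in fset_lt T x -> prec ((x |` T) `\ y') S -> y <= y') ->
  (forall S', S' `<=` S ->
     tri U (tri T S') = tri U (tri ((x |` T) `\ y) S')) /\
  tri U T = tri U ((x |` T) `\ y).
Proof.
Local Open Scope nat_scope.
move=> _ _ _ hUT hTS hx hxT hcnt hy hT'S hmin.
have /andP [hyT hyx] : (y \in T) && (y < x) by move: hy; rewrite /fset_lt !inE.
move: hcnt; rewrite /fset_lt !C_card => hcnt.
have {}hcnt : C U (fun w => w < x) = C T (fun w => w < x) := hcnt.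
have DUT : forall v, C T (fun w => w <= v) <= C U (fun w => w < v) := (prec_count U T).1 hUT.
have DTS : forall v, C S (fun w => w <= v) <= C T (fun w => w < v) := (prec_count T S).1 hTS.
have DT'S : forall v, C S (fun w => w <= v) <= C ((x |` T) `\ y) (fun w => w < v) := (prec_count _ S).1 hT'S.
have SwT : forall v, C ((x |` T) `\ y) (fun w => w < v) + (y < v) = (x < v) + C T (fun w => w < v).
  by move=> v; apply: (C_swap (fun w => w < v) hyT hxT).
have Tight : C T (fun w => w < y) <= C S (fun w => w <= y).
  rewrite leqNgt; apply/negP => Hlt.
  have [z0 Hz0 Hz0y] := C_pos (leq_ltn_trans (leq0n _) Hlt).
  have [y' [Hy'T Hy'y Hmax]] := ex_max_in (q := fun w => w < y) Hz0 Hz0y.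
  have Hy'x : y' < x by apply: ltn_trans Hy'y hyx.
  have Hprec : prec ((x |` T) `\ y') S.
    apply/prec_count => v.
    have Sw := C_swap (fun w => w < v) Hy'T hxT; simpl in Sw.
    case: (leqP v y') => Hv1.
      have := DTS v; move: Sw; rewrite [y' < v]ltnNge Hv1 [x < v]ltnNge (ltnW (leq_ltn_trans Hv1 Hy'x)) /=; lia.
    case: (leqP v y) => Hv2.
      have E1 : C S (fun w => w <= v) <= C S (fun w => w <= y).
        by apply: C_sub => z Hz /= Hzv; rewrite Hz /=; lia.
      have E2 : C T (fun w => w < y) <= C T (fun w => w < v).
        apply: C_sub => z Hz /= Hzy; rewrite Hz /=.
        have := Hmax z Hz Hzy; lia.
      move: Sw; rewrite Hv1 [x < v]ltnNge (ltnW (leq_ltn_trans Hv2 hyx)) /=; lia.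
    case: (leqP v x) => Hv3.
      have := DT'S v; have := SwT v.
      move: Sw; rewrite Hv1 Hv2 [x < v]ltnNge Hv3 /=; lia.
    have := DTS v; move: Sw; rewrite Hv1 Hv3 /=; lia.
  have := hmin y'; rewrite /fset_lt !inE Hy'T Hy'x => /(_ isT Hprec); lia.
have DomS : forall v, y < v -> v <= x -> C S (fun w => y < w <= v) <= C T (fun w => y < w < v).
  move=> v Hyv Hvx.
  have := DT'S v; have := SwT v; rewrite Hyv [x < v]ltnNge Hvx /=.
  have E1 : C S (fun w => w <= v) = C S (fun w => w <= y) + C S (fun w => y < w <= v).
    apply: C_split => z _; lia.
  have E2 : C T (fun w => w < v) = C T (fun w => w < y) + C T (fun w => y <= w < v).
    apply: C_split => z _; lia.
  have E3 : C T (fun w => y <= w < v) = C T (fun w => w == y) + C T (fun w => y < w < v).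
    apply: C_split => z _; first by case: (eqVneq z y) => [->|H] /=; [rewrite leqnn Hyv | lia].
    by apply/negP => /andP [/eqP ->]; rewrite ltnn.
  rewrite C_one // in E3.
  lia.
have Loc : forall u, u \in U -> u < x -> C U (fun w => u < w < x) < C T (fun w => u < w < x).
  move=> u Hu Hux.
  have := DUT u.
  have E1 : C U (fun w => w < x) = C U (fun w => w < u) + C U (fun w => u <= w < x).
    apply: C_split => z _; lia.
  have E2 : C U (fun w => u <= w < x) = C U (fun w => w == u) + C U (fun w => u < w < x).
    apply: C_split => z _; first by case: (eqVneq z u) => [->|H] /=; [rewrite leqnn Hux | lia].
    by apply/negP => /andP [/eqP ->]; rewrite ltnn.
  have E3 : C T (fun w => w < x) = C T (fun w => w <= u) + C T (fun w => u < w < x).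
    apply: C_split => z _; lia.
  rewrite C_one // in E2.
  lia.
split.
  move=> S' HS'.
  have DomS' : forall v, y < v -> v <= x -> C S' (fun w => y < w <= v) <= C T (fun w => y < w < v).
    move=> v H1 H2; apply: leq_trans (DomS v H1 H2).
    by apply: C_sub => z Hz ->; rewrite (fsubsetP HS' z Hz).
  case: (Tlevel (tri_spec T S') hyT hyx hxT DomS') => [->//|[p [HpA Hpx -> HiA]]].
  have HP := tri_spec U (tri T S').
  have HP' : Pm U ((x |` tri T S') `\ p) (tri U (tri T S')).
    apply: UL HP HpA _ Hpx _.
      by apply/negP => /(fsubsetP (tri_spec T S').1); rewrite (negbTE hxT).
    move=> u Hu Hpu Hux; apply: (leq_trans (Loc u Hu Hux)).
    apply: C_sub => z Hz /andP [H1 H2]; rewrite H1 H2 andbT.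
    rewrite andbT; apply: HiA => //; lia.
  exact: Pm_unique HP' (tri_spec _ _).
have HP := tri_spec U T.
have HP' : Pm U ((x |` T) `\ y) (tri U T).
  apply: UL HP hyT hxT hyx _.
  move=> u Hu _ Hux; exact: Loc u Hu Hux.
exact: Pm_unique HP' (tri_spec _ _).
Qed.
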